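(* Let $p\in[1,\infty]$ and let $\{E_i\}_{i\in I}$ be a nonempty family of locally convex spaces. (i) If $I=\omega$ is countable, then the topological product $\prod_{i\in\omega}E_i$ has the $wCSP_p$ if and only if every $E_i$ has the $wCSP_p$. (ii) The locally convex direct sum $\bigoplus_{i\in I}E_i$ has the $wCSP_p$ if and only if every $E_i$ has the $wCSP_p$.
   Context: Locally convex spaces are Hausdorff over $\mathbb R$ or $\mathbb C$. For $p\in[1,\infty]$, a sequence $(x_n)$ in a locally convex space $E$ is weakly $p$-summable if for every $\chi\in E'$ the sequence $(\chi(x_n))_n$ lies in $\ell_p$ (if $p<\infty$) or in $c_0$ (if $p=\infty$). A sequence $(x_n)$ is weakly $p$-Cauchy if for every pair of strictly increasing sequences $(k_n),(j_n)$ in $\omega$ the sequence $(x_{k_n}-x_{j_n})_n$ is weakly $p$-summable. $E$ has the weak Cauchy subsequence property of order $p$ ($wCSP_p$) if every bounded sequence in $E$ has a weakly $p$-Cauchy subsequence. *)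

(* Defs.v *)
From HB Require Import structures.
From mathcomp Require Import all_boot all_order all_algebra.
From mathcomp Require Import complex.
From mathcomp Require Import all_classical all_reals all_analysis.
Set Implicit Arguments.
Unset Strict Implicit.
Unset Printing Implicit Defensive.
Import Order.TTheory GRing.Theory Num.Theory.
Import numFieldNormedType.Exports.
Local Open Scope ring_scope.
Local Open Scope classical_set_scope.

Definition lcs_field (R : realType) (b : bool) : numFieldType :=
  if b then (R[i] : numFieldType) else (R : numFieldType).

Definition absK (R : realType) (b : bool) : lcs_field R b -> R :=
  match b return lcs_field R b -> R with
  | true => fun z : R[i] => complex.Re `|z|
  | false => fun x : R => `|x|
  end.

Section WCSP.
Context {R : realType} {b : bool}.
Local Notation K := (lcs_field R b).

(** membership of a nonnegative real sequence [a] (here a = |chi(x_n)|)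
    in l_p (p < oo), resp. c_0 (p = oo) *)
Definition lp_seq (p : \bar R) (a : nat -> R) : Prop :=
  match p with
  | EFin r => cvgn (series (fun n => a n `^ r))
  | +oo%E => a @ \oo --> (0 : R)
  | -oo%E => False
  end.

Context {E : preTopologicalLmodType K}.

Definition weakly_summable (p : \bar R) (x : nat -> E) : Prop :=
  forall chi : {linear E -> K^o}, continuous chi ->
    lp_seq p (fun n => absK (chi (x n))).

Definition weakly_Cauchy (p : \bar R) (x : nat -> E) : Prop :=
  forall k j : nat -> nat,
    {homo k : m n / (m < n)%N} -> {homo j : m n / (m < n)%N} ->
    weakly_summable p (fun n => x (k n) - x (j n)).

Definition tvs_bounded (B : set E) : Prop :=
  forall U : set E, nbhs (0 : E) U ->
    exists2 s : K, 0 < s & forall t : K, s < t -> B `<=` ( *:%R t) @` U.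

Definition wCSP (p : \bar R) : Prop :=
  forall x : nat -> E, tvs_bounded (range x) ->
    exists2 f : nat -> nat, {homo f : m n / (m < n)%N} &
      weakly_Cauchy p (x \o f).

End WCSP.

Section Product.
Context {K : numFieldType} {I : Type} (E : I -> tvsType K).

Definition prodLCS := forall i, E i.

HB.instance Definition _ :=
  Topological.copy prodLCS (prod_topology (fun i => (E i : topologicalType))).

Let pzero : prodLCS := fun i => 0.
Let padd (f g : prodLCS) : prodLCS := fun i => f i + g i.
Let popp (f : prodLCS) : prodLCS := fun i => - f i.
Let pscale (k : K) (f : prodLCS) : prodLCS := fun i => k *: f i.

Let paddA : associative padd.
Proof. by move=> f g h; apply: functional_extensionality_dep => i; exact: addrA. Qed.
Let paddC : commutative padd.
Proof. by move=> f g; apply: functional_extensionality_dep => i; exact: addrC. Qed.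
Let padd0 : left_id pzero padd.
Proof. by move=> f; apply: functional_extensionality_dep => i; exact: add0r. Qed.
Let paddN : left_inverse pzero popp padd.
Proof. by move=> f; apply: functional_extensionality_dep => i; exact: addNr. Qed.

HB.instance Definition _ := GRing.isZmodule.Build prodLCS paddA paddC padd0 paddN.

Let pscaleA a c f : pscale a (pscale c f) = pscale (a * c) f.
Proof. by apply: functional_extensionality_dep => i; exact: scalerA. Qed.
Let pscale1 : left_id 1 pscale.
Proof. by move=> f; apply: functional_extensionality_dep => i; exact: scale1r. Qed.
Let pscaleDr : right_distributive pscale +%R.
Proof. by move=> a f g; apply: functional_extensionality_dep => i; exact: scalerDr. Qed.
Let pscaleDl f : {morph pscale^~ f : a c / a + c}.
Proof. by move=> a c; apply: functional_extensionality_dep => i; exact: scalerDl. Qed.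

HB.instance Definition _ :=
  GRing.Zmodule_isLmodule.Build K prodLCS pscaleA pscale1 pscaleDr pscaleDl.

End Product.

Section DirectSum.
Context {K : numFieldType} {I : Type} (E : I -> tvsType K).

Definition finsupp (f : forall i, E i) := finite_set [set i | f i != 0].

Definition dsumLCS := {f : forall i, E i | finsupp f}.

HB.instance Definition _ := gen_eqMixin dsumLCS.
HB.instance Definition _ := gen_choiceMixin dsumLCS.

Lemma dsum_eq (x y : dsumLCS) : proj1_sig x = proj1_sig y -> x = y.
Proof.
case: x => f hf; case: y => g hg /= efg; subst g.
by congr exist; exact: Prop_irrelevance.
Qed.

Let supp0 : finsupp (fun i => 0 : E i).
Proof.
apply: (sub_finite_set _ (finite_set0 I)) => i /=.
by rewrite eqxx.
Qed.

Let suppD (f g : forall i, E i) : finsupp f -> finsupp g ->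
  finsupp (fun i => f i + g i).
Proof.
move=> hf hg.
have hU : finite_set ([set i | f i != 0] `|` [set i | g i != 0]) by rewrite finite_setU.
apply: (sub_finite_set _ hU).
move=> i /= hfg; have [fi|fi] := eqVneq (f i) 0; last by left.
by right; move: hfg; rewrite fi add0r.
Qed.

Let suppN (f : forall i, E i) : finsupp f -> finsupp (fun i => - f i).
Proof.
move=> hf; apply: (sub_finite_set _ hf) => i /=.
by rewrite oppr_eq0.
Qed.

Let suppZ (k : K) (f : forall i, E i) : finsupp f -> finsupp (fun i => k *: f i).
Proof.
move=> hf; apply: (sub_finite_set _ hf) => i /=.
by apply: contraNN => /eqP ->; rewrite scaler0.
Qed.

Let dzero : dsumLCS := exist _ _ supp0.
Let dadd (x y : dsumLCS) : dsumLCS :=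
  exist _ _ (suppD (proj2_sig x) (proj2_sig y)).
Let dopp (x : dsumLCS) : dsumLCS := exist _ _ (suppN (proj2_sig x)).
Let dscale (k : K) (x : dsumLCS) : dsumLCS := exist _ _ (suppZ k (proj2_sig x)).

Let daddA : associative dadd.
Proof.
by move=> x y z; apply: dsum_eq; apply: functional_extensionality_dep => i;
  exact: addrA.
Qed.
Let daddC : commutative dadd.
Proof.
by move=> x y; apply: dsum_eq; apply: functional_extensionality_dep => i;
  exact: addrC.
Qed.
Let dadd0 : left_id dzero dadd.
Proof.
by move=> x; apply: dsum_eq; apply: functional_extensionality_dep => i;
  exact: add0r.
Qed.
Let daddN : left_inverse dzero dopp dadd.
Proof.
by move=> x; apply: dsum_eq; apply: functional_extensionality_dep => i;
  exact: addNr.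
Qed.

HB.instance Definition _ := GRing.isZmodule.Build dsumLCS daddA daddC dadd0 daddN.

Let dscaleA a c x : dscale a (dscale c x) = dscale (a * c) x.
Proof.
by apply: dsum_eq; apply: functional_extensionality_dep => i; exact: scalerA.
Qed.
Let dscale1 : left_id 1 dscale.
Proof.
by move=> x; apply: dsum_eq; apply: functional_extensionality_dep => i;
  exact: scale1r.
Qed.
Let dscaleDr : right_distributive dscale +%R.
Proof.
by move=> a x y; apply: dsum_eq; apply: functional_extensionality_dep => i;
  exact: scalerDr.
Qed.
Let dscaleDl x : {morph dscale^~ x : a c / a + c}.
Proof.
by move=> a c; apply: dsum_eq; apply: functional_extensionality_dep => i;
  exact: scalerDl.
Qed.

HB.instance Definition _ :=
  GRing.Zmodule_isLmodule.Build K dsumLCS dscaleA dscale1 dscaleDr dscaleDl.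

Definition dsinj_fun (i : I) (v : E i) : forall j, E j :=
  fun j => match pselect (i = j) with
           | left e => eq_rect i E v j e
           | right _ => 0
           end.

Let dsinj_supp (i : I) (v : E i) : finsupp (dsinj_fun v).
Proof.
apply: (sub_finite_set _ (finite_set1 i)) => j /=; rewrite /dsinj_fun.
by case: pselect => // ij; rewrite eqxx.
Qed.

Definition dsinj (i : I) (v : E i) : dsumLCS := exist _ _ (dsinj_supp v).

Definition balanced_set {M : lmodType K} (V : set M) :=
  forall t : K, `|t| <= 1 -> ( *:%R t) @` V `<=` V.

(** The locally convex direct sum topology: the finest locally convex
    topology making every J_i continuous. *)
Definition dsum_zero_nbhd (V : set dsumLCS) : Prop :=
  [/\ convex_set (V : set (convex_lmodType dsumLCS)), balanced_set V &
      forall i, nbhs (0 : E i) (@dsinj i @^-1` V)].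

Definition dsum_open (A : set dsumLCS) : Prop :=
  forall x, A x -> exists2 V, dsum_zero_nbhd V & (+%R x) @` V `<=` A.

Let dsum_openT : dsum_open setT.
Proof.
move=> x _; exists setT => //; split.
- by move=> y z l _ _; rewrite inE.
- by move=> t _ y.
- by move=> i; exact: filterT.
Qed.

Let dsum_openI : setI_closed dsum_open.
Proof.
move=> A B oA oB x [Ax Bx].
have [V [cV bV nV] VA] := oA x Ax.
have [W [cW bW nW] WB] := oB x Bx.
exists (V `&` W); last first.
  by move=> y [z [Vz Wz] <-]; split; [apply: VA | apply: WB]; exists z.
split.
- move=> y z l /set_mem[Vy Wy] /set_mem[Vz Wz]; apply/mem_set; split.
    by apply/set_mem/cV; apply/mem_set.
  by apply/set_mem/cW; apply/mem_set.
- move=> t t1 y [z [Vz Wz] <-]; split.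
    by apply: (bV t t1); exists z.
  by apply: (bW t t1); exists z.
- by move=> i; rewrite preimage_setI; apply: filterI.
Qed.

Let dsum_open_bigU (J : Type) (f : J -> set dsumLCS) :
  (forall j, dsum_open (f j)) -> dsum_open (\bigcup_j f j).
Proof.
move=> oF x [j _ fjx]; have [V nV Vf] := oF j x fjx.
by exists V => // y /Vf fy; exists j.
Qed.

HB.instance Definition _ :=
  isOpenTopological.Build dsumLCS dsum_openT dsum_openI dsum_open_bigU.

End DirectSum.

(* Main.v *)
Require Import Defs.
From HB Require Import structures.
From mathcomp Require Import all_boot all_order all_algebra.
From mathcomp Require Import complex.
From mathcomp Require Import all_classical all_reals all_analysis.
From mathcomp Require Import ring.
Import Order.TTheory GRing.Theory Num.Theory.
Import numFieldNormedType.Exports.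
Local Open Scope ring_scope.
Local Open Scope classical_set_scope.


Section LP.
Context {R : realType}.

Lemma lp_ext (p : \bar R) (a c : nat -> R) (N : nat) :
  lp_seq p a -> (forall n, (N <= n)%N -> c n = a n) -> lp_seq p c.
Proof.
case: p => [r| |] //= ha eq.
- rewrite -(is_cvg_series_restrict N); rewrite -(is_cvg_series_restrict N) in ha.
  suff -> : [sequence \sum_(N <= k < n) c k `^ r]_n =
            [sequence \sum_(N <= k < n) a k `^ r]_n by [].
  apply/funext => n /=; apply: eq_big_nat => k /andP[Nk _]; by rewrite eq.
- rewrite -(cvg_shiftn N); rewrite -(cvg_shiftn N) in ha.
  suff -> : [sequence c (n + N)%N]_n = [sequence a (n + N)%N]_n by [].
  by apply/funext => n /=; rewrite eq // leq_addl.
Qed.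

Lemma lp_le (p : \bar R) (a c : nat -> R) : (1 <= p)%E ->
  (forall n, 0 <= c n <= a n) -> lp_seq p a -> lp_seq p c.
Proof.
case: p => [r| |] //= r1 hca ha.
- have r0 : 0 <= r by rewrite lee_fin in r1; apply: le_trans r1.
  apply: (series_le_cvg _ _ _ ha) => n; rewrite ?powR_ge0 //.
  have /andP[c0 ca] := hca n.
  by apply: ge0_ler_powR => //; rewrite nnegrE // (le_trans c0 ca).
- apply: (@squeeze_cvgr _ _ _ _ (fun=> 0) a) => //; last exact: cvg_cst.
  by near=> n.
Unshelve. all: by end_near. Qed.

Lemma lp_add (p : \bar R) (a c : nat -> R) : (1 <= p)%E ->
  (forall n, 0 <= a n) -> (forall n, 0 <= c n) ->
  lp_seq p a -> lp_seq p c -> lp_seq p (fun n => a n + c n).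
Proof.
case: p => [r| |] //= r1 a0 c0 ha hc.
- have r0 : 0 <= r by rewrite lee_fin in r1; apply: le_trans r1.
  pose d n := 2 `^ r * (a n `^ r + c n `^ r).
  have hd : cvgn (series d).
    rewrite /d; have -> : (fun n => 2 `^ r * (a n `^ r + c n `^ r)) =
       (2 `^ r) *: ((fun n => a n `^ r) + (fun n => c n `^ r)) by [].
    apply: is_cvg_seriesZ; rewrite seriesD; apply: is_cvgD => //.
  apply: (series_le_cvg _ _ _ hd) => n; rewrite ?powR_ge0 //.
    by rewrite /d mulr_ge0 ?addr_ge0 ?powR_ge0.
  have hm : a n + c n <= 2 * Num.max (a n) (c n).
    by rewrite mulr2n mulrDl mul1r lerD ?le_max ?lexx ?orbT.
  apply: (le_trans (ge0_ler_powR r0 _ _ hm)); rewrite ?nnegrE ?addr_ge0 ?mulr_ge0 ?le_max ?a0 //.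
  rewrite powRM // ?le_max ?a0 // /d ler_wpM2l ?powR_ge0 //.
  case: (leP (a n) (c n)) => _; rewrite ?lerDl ?lerDr powR_ge0 //.
- have -> : 0 = 0 + 0 :> R by rewrite addr0.
  exact: cvgD.
Qed.

Lemma lp_0 (p : \bar R) : (1 <= p)%E -> lp_seq p (fun=> 0).
Proof.
case: p => [r| |] //= r1.
- have r0 : r != 0 by rewrite lee_fin in r1; rewrite gt_eqF // (lt_le_trans ltr01 r1).
  rewrite powR0 //; apply/cvg_ex; exists 0; apply: cvg_near_cst; near=> n.
  by rewrite /series /= big1.
- exact: cvg_cst.
Unshelve. all: by end_near. Qed.

End LP.


Section AbsK.
Context {R : realType} {b : bool}.
Local Notation K := (lcs_field R b).
Lemma absK_ge0 (x : K) : 0 <= absK x.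
Proof.
case: b x => /= x; last by [].
by have := normr_ge0 x; rewrite lecE => /andP[].
Qed.
Lemma absKD (x y : K) : absK (x + y) <= absK x + absK y.
Proof.
case: b x y => /= x y; last exact: ler_normD.
have := ler_normD x y; rewrite lecE => /andP[_].
move=> h; apply: le_trans h _; rewrite le_eqVlt; apply/orP; left; apply/eqP.
by [].
Qed.
Lemma absKN (x : K) : absK (- x) = absK x.
Proof. move: x; case: b => x; [exact (congr1 (@complex.Re R) (normrN (x : R[i]))) | exact: normrN]. Qed.
Lemma absK0 : absK (0 : K) = 0.
Proof. case: b; [exact (congr1 (@complex.Re R) (@normr0 _ (R[i]))) | exact: normr0]. Qed.

Lemma absK_sum (N : nat) (a : nat -> K) :
  absK (\sum_(k < N) a k) <= \sum_(k < N) absK (a k).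
Proof.
elim: N => [|N IH]; first by rewrite !big_ord0 absK0.
rewrite !big_ord_recr /=; apply: le_trans (absKD _ _) _; by rewrite lerD2r.
Qed.

Lemma lp_sum (p : \bar R) (N : nat) (a : nat -> nat -> R) : (1 <= p)%E ->
  (forall k n, 0 <= a k n) ->
  (forall k, (k < N)%N -> lp_seq p (a k)) ->
  lp_seq p (fun n => \sum_(k < N) a k n).
Proof.
move=> p1 a0; elim: N => [|N IH] h.
  by under eq_fun do rewrite big_ord0; exact: lp_0.
under eq_fun do rewrite big_ord_recr /=.
apply: lp_add => //.
- by move=> n; apply: sumr_ge0.
- by apply: IH => k kN; apply: h; rewrite ltnS ltnW.
- exact: h.
Qed.
End AbsK.

Section Generic.
Context {R : realType} {b : bool}.
Local Notation K := (lcs_field R b).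
Implicit Types (p : \bar R).

Lemma WS_combine {E : preTopologicalLmodType K} p (y : nat -> E) : (1 <= p)%E ->
  (forall chi : {linear E -> K^o}, continuous chi ->
     exists N (a : nat -> nat -> K),
       (forall k, (k < N)%N -> lp_seq p (fun n => absK (a k n))) /\
       (forall n, chi (y n) = \sum_(k < N) a k n)) ->
  weakly_summable p y.
Proof.
move=> p1 h chi cchi; have [N [a [ha eq]]] := h chi cchi.
apply: (lp_le _ _ _ p1 _ (lp_sum p N (fun k n => absK (a k n)) p1 (fun k n => absK_ge0 (a k n)) ha)) => n.
rewrite absK_ge0 eq /=; exact: (absK_sum N (fun k => a k n)).
Qed.

Lemma WC_sub {E : preTopologicalLmodType K} p (y : nat -> E) (f : nat -> nat) :
  {homo f : m n / (m < n)%N} -> weakly_Cauchy p y -> weakly_Cauchy p (y \o f).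
Proof.
move=> hf hy k j hk hj; apply: (hy (f \o k) (f \o j)).
- by move=> m n mn; apply/hf/hk.
- by move=> m n mn; apply/hf/hj.
Qed.

Lemma WC_lin {E F : preTopologicalLmodType K} p (S : {linear E -> F}) (y : nat -> E) :
  continuous S -> weakly_Cauchy p y -> weakly_Cauchy p (S \o y).
Proof.
move=> cS hy k j hk hj chi cchi.
have := hy k j hk hj (chi \o S) (fun x => continuous_comp (cS x) (cchi (S x))).
suff -> : (fun n => absK (chi ((S \o y) (k n) - (S \o y) (j n)))) = (fun n => absK ((chi \o S) (y (k n) - y (j n)))) by [].
apply: funext => n /=; rewrite [S (_ - _)]linearB; done.
Qed.

Lemma bounded_sub {E : preTopologicalLmodType K} (x : nat -> E) (f : nat -> nat) :
  tvs_bounded (range x) -> tvs_bounded (range (x \o f)).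
Proof.
move=> hx U hU; have [s s0 hs] := hx U hU; exists s => // t st z [n _ <-].
by apply: hs => //; exists (f n).
Qed.

Lemma bounded_lin {E F : preTopologicalLmodType K} (T : {linear E -> F}) (x : nat -> E) :
  continuous T -> tvs_bounded (range x) -> tvs_bounded (range (T \o x)).
Proof.
move=> cT hx U hU.
have hU' : nbhs (0 : E) (T @^-1` U).
  by apply: cT; rewrite linear0.
have [s s0 hs] := hx _ hU'; exists s => // t st z [n _ <-].
have [u Uu eu] := hs t st (x n) (ex_intro2 _ _ n I erefl).
by exists (T u) => //=; rewrite -linearZ /= eu.
Qed.

Lemma wCSP_retract {E F : preTopologicalLmodType K} p
  (T : {linear E -> F}) (S : {linear F -> E}) :
  continuous T -> continuous S -> (forall v, S (T v) = v) ->
  wCSP (E := F) p -> wCSP (E := E) p.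
Proof.
move=> cT cS ST hF x hx.
have [f hf hWC] := hF _ (bounded_lin _ _ cT hx).
exists f => //; have := WC_lin _ _ _ cS hWC.
by have -> : S \o (T \o x \o f) = x \o f by apply/funext => n /=; rewrite ST.
Qed.

End Generic.


Lemma incr_ge (f : nat -> nat) : {homo f : m n / (m < n)%N} -> forall n, (n <= f n)%N.
Proof.
move=> hf; elim => [|n IH] //; apply: leq_ltn_trans IH _; exact: hf.
Qed.

Lemma incr_comp (f g : nat -> nat) : {homo f : m n / (m < n)%N} ->
  {homo g : m n / (m < n)%N} -> {homo (f \o g) : m n / (m < n)%N}.
Proof. by move=> hf hg m n mn; apply/hf/hg. Qed.

Section Shift.
Context {R : realType}.

Lemma lp_shift (p : \bar R) (u : nat -> R) (i : nat) :
  lp_seq p (fun n => u (n + i)%N) -> lp_seq p u.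
Proof.
case: p => [r| |] //=.
- move=> /cvg_ex [l hl]; rewrite -(is_cvg_series_restrict i).
  apply/cvg_ex; exists l; rewrite -(cvg_shiftn i).
  suff -> : [sequence \sum_(i <= k < n + i) u k `^ r]_n =
            series (fun n => u (n + i)%N `^ r) by [].
  apply/funext => n /=; rewrite -[X in \sum_(X <= _ < _) _]add0n big_addn addnK.
  by rewrite /series /=.
- by move=> h; rewrite -(cvg_shiftn i); exact: h.
Qed.
End Shift.

Section WCShift.
Context {R : realType} {b : bool}.
Local Notation K := (lcs_field R b).

Lemma WC_shift {E : preTopologicalLmodType K} (p : \bar R) (z w : nat -> E)
  (i : nat) (h : nat -> nat) :
  {homo h : m n / (m < n)%N} -> (forall n, z (n + i)%N = w (h n)) ->
  weakly_Cauchy p w -> weakly_Cauchy p z.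
Proof.
move=> hh hzw hw k j hk hj chi cchi; apply: (lp_shift _ _ i).
pose k' n := (k (n + i) - i)%N; pose j' n := (j (n + i) - i)%N.
have gek n : (i <= k (n + i))%N.
  exact: leq_trans (leq_addl n i) (incr_ge _ hk _).
have gej n : (i <= j (n + i))%N.
  exact: leq_trans (leq_addl n i) (incr_ge _ hj _).
have hk' : {homo k' : m n / (m < n)%N}.
  move=> m n mn; rewrite /k' ltn_sub2rE ?gek //; apply: hk; by rewrite ltn_add2r.
have hj' : {homo j' : m n / (m < n)%N}.
  move=> m n mn; rewrite /j' ltn_sub2rE ?gej //; apply: hj; by rewrite ltn_add2r.
have := hw _ _ (incr_comp _ _ hh hk') (incr_comp _ _ hh hj') chi cchi.
suff -> : (fun n => absK (chi (w ((h \o k') n) - w ((h \o j') n)))) =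
          (fun n => absK (chi (z (k (n + i)%N) - z (j (n + i)%N)))) by [].
apply: funext => n /=; rewrite -!hzw /k' /j' !subnK //.
Qed.
End WCShift.

Section Diag.

Lemma diag (Q : nat -> (nat -> nat) -> Prop) :
  (forall i s, {homo s : m n / (m < n)%N} ->
     exists f, {homo f : m n / (m < n)%N} /\ Q i (s \o f)) ->
  exists d, {homo d : m n / (m < n)%N} /\
    forall i, exists s h, [/\ Q i s, {homo h : m n / (m < n)%N} &
                            forall n, d (n + i)%N = s (h n)].
Proof.
move=> H.
have H' : forall i s, exists f, {homo s : m n / (m < n)%N} ->
   {homo f : m n / (m < n)%N} /\ Q i (s \o f).
  move=> i s; have [hs|hs] := pselect {homo s : m n / (m < n)%N}.
    by have [f hf] := H i s hs; exists f.
  by exists id.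
have [F hF] : exists F : nat -> (nat -> nat) -> (nat -> nat), forall i s,
   {homo s : m n / (m < n)%N} ->
   {homo F i s : m n / (m < n)%N} /\ Q i (s \o F i s).
  have := fun i => choice (H' i) => Hc.
  have [F hF] := choice (fun i => ex_intro _ (projT1 (Hc i)) (projT2 (Hc i))).
  by exists F.
pose fix G n := match n with 0 => F 0%N id | n'.+1 => G n' \o F n (G n') end.
have incrG : forall n, {homo G n : m k / (m < k)%N}.
  elim => [|n IH] /=; first by have [] := hF 0%N id (fun m k mk => mk).
  apply: incr_comp => //; by have [] := hF n.+1 _ IH.
have QG : forall n, Q n (G n).
  case => [|n] /=; first by have [_] := hF 0%N id (fun m k mk => mk).
  by have [_] := hF n.+1 _ (incrG n).
pose fix Hh i t := match t with 0 => id | t'.+1 => Hh i t' \o F (t' + i).+1 (G (t' + i)) end.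
have GH i t : G (t + i)%N = G i \o Hh i t.
  elim: t => [|t IH] //=.
  by rewrite IH.
have incrH i t : {homo Hh i t : m k / (m < k)%N}.
  elim: t => [|t IH] //=; apply: incr_comp => //.
  by have [] := hF (t + i).+1 _ (incrG (t + i)%N).
exists (fun n => G n n); split.
  apply: homo_ltn; first by move=> ? ? ?; exact: ltn_trans.
  move=> n /=.
  apply: (incrG n); have [h1 _] := hF n.+1 _ (incrG n).
  exact: (incr_ge _ h1 n.+1).
move=> i; exists (G i), (fun t => Hh i t (t + i)%N); split => //.
- apply: homo_ltn; first by move=> ? ? ?; exact: ltn_trans.
  move=> t /=.
  apply: incrH; have [h1 _] := hF (t + i).+1 _ (incrG (t + i)%N).
  by apply: leq_trans (incr_ge _ h1 _); rewrite addSn.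
- by move=> n; rewrite GH.
Qed.
End Diag.

Local Open Scope convex_scope.

Lemma hsep {T : topologicalType} (p q : T) : hausdorff_space T -> p <> q ->
  exists U, nbhs p U /\ ~ U q.
Proof.
move=> hT pq; apply: contrapT => hn; apply: pq; apply: hT => A B nA nB.
exists q; split; last exact: nbhs_singleton.
by apply: contrapT => nAq; apply: hn; exists A.
Qed.

Section CB.
Context {K : numFieldType} {E : tvsType K}.

Lemma convex_nbhs (U : set E) : nbhs 0 U ->
  exists C : set E, [/\ nbhs 0 C, C `<=` U & convex_set (C : set (convex_lmodType E))].
Proof.
move=> U0; have [B Bc [Bo Bb]] := @locally_convex K E.
have [C [BC C0] CU] := Bb 0 U U0.
exists C; split => //; last by apply: Bc; rewrite inE.
by apply: open_nbhs_nbhs; split => //; exact: Bo.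
Qed.

Lemma convE (x y : convex_lmodType E) (l : {i01 K}) :
  (x <| l |> y) = l%:num *: (x : E) + (1 - l%:num) *: (y : E).
Proof. by []. Qed.

Lemma seg (C : set E) (y : E) (a : K) :
  convex_set (C : set (convex_lmodType E)) -> C 0 -> C y ->
  0 <= a -> a <= 1 -> C (a *: y).
Proof.
move=> cC C0 Cy a0 a1.
have := cC (y : convex_lmodType E) (0 : convex_lmodType E) (Itv01 a0 a1).
rewrite !inE convE /= scaler0 addr0; by apply.
Qed.

Lemma balanced_hull (C : set E) :
  convex_set (C : set (convex_lmodType E)) ->
  let Q := [set x : E | forall t : K, `|t| <= 1 -> C (t *: x)] in
  [/\ Q `<=` C, convex_set (Q : set (convex_lmodType E)) & balanced_set Q].
Proof.
move=> cC Q; split.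
- by move=> x Qx; rewrite -[x]scale1r; apply: Qx; rewrite normr1.
- move=> x y l /set_mem Qx /set_mem Qy; apply/mem_set => t t1.
  rewrite convE scalerDr !scalerA ![t * _]mulrC -!scalerA.
  have := cC (t *: x : convex_lmodType E) (t *: y : convex_lmodType E) l.
  by rewrite !inE convE; apply; [exact: Qx | exact: Qy].
- move=> t t1 _ [x Qx <-] s s1; rewrite scalerA; apply: Qx.
  by rewrite normrM; apply: le_trans (ler_pM _ _ s1 t1) _; rewrite ?mulr1.
Qed.

End CB.

Lemma half_id (F : fieldType) (a : F) : (2:F) != 0 -> a = 2^-1 * a * 2.
Proof. move=> h; field. exact h. Qed.
Lemma half_id2 (F : fieldType) (c i : F) : (2:F) != 0 -> i * c = (1 - 2^-1) * (c * (2 * i)).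
Proof. move=> h; field. exact h. Qed.

Section CB2.
Variable R : realType.
Lemma normC (a : R) : `|a%:C%C| = `|a|%:C%C.
Proof. by rewrite normc_def /= expr0n addr0 sqrtr_sqr. Qed.
Lemma realC (a : R) : a%:C%C \is Num.real.
Proof. rewrite realE -[0]/(0%:C%C) !lecR; exact: num_real. Qed.
Lemma le1C (a : R) : `|a| <= 1 -> `|a%:C%C| <= 1.
Proof. by rewrite normC -(lecR _ 1). Qed.

Lemma normi : `|'i%C| = 1 :> R[i].
Proof. rewrite normc_def /= expr0n expr1n add0r sqrtr1. by []. Qed.
Lemma absRe (t : R[i]) : `|t| <= 1 -> `|complex.Re t| <= 1.
Proof. move=> h; have := le_trans (normc_ge_Re t) h. by rewrite -[1]/(1%:C%C) lecR. Qed.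
Lemma absIm (t : R[i]) : `|t| <= 1 -> `|complex.Im t| <= 1.
Proof. move=> h; rewrite -normrN -ReiNIm; apply: absRe. by rewrite normrM normi mulr1. Qed.

Lemma nbhs_scale {K : numFieldType} {E : tvsType K} (C : set E) (c : K) :
  c != 0 -> nbhs 0 C -> nbhs 0 [set x | C (c *: x)].
Proof.
move=> c0 C0; have := nbhs0Z (invr_neq0 c0) C0.
by apply: filterS => _ [y Cy <-] /=; rewrite scalerA divff // scale1r.
Qed.

Lemma seg_sym {K : numFieldType} {E : tvsType K} (C : set E) (y : E) (a : K) :
  convex_set (C : set (convex_lmodType E)) -> C 0 -> C y -> C (- y) ->
  a \is Num.real -> `|a| <= 1 -> C (a *: y).
Proof.
move=> cC C0 Cy Cny ar a1; have [a0|a0] := real_ge0P ar.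
  by apply: seg => //; rewrite ger0_norm in a1.
rewrite -[a]opprK scaleNr -scalerN; apply: seg => //.
  by rewrite oppr_ge0 ltW.
by rewrite ltr0_norm in a1.
Qed.

Lemma nbhs_hull {b : bool} {E : tvsType (lcs_field R b)} (C : set E) :
  nbhs 0 C -> convex_set (C : set (convex_lmodType E)) ->
  nbhs 0 [set x : E | forall t : lcs_field R b, `|t| <= 1 -> C (t *: x)].
Proof.
move=> C0 cC; have C00 : C 0 := nbhs_singleton C0.
move: E C C0 cC C00; case: b => E C C0 cC C00.
-
  have h2 : (2 : R[i]) != 0 by rewrite pnatr_eq0.
  have hN : forall c : R[i], c != 0 -> - c != 0 by move=> c; rewrite oppr_eq0.
  have hi : (2 * 'i%C : R[i]) != 0.
    by rewrite mulf_neq0 // -normr_eq0 normi oner_eq0.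
  have H1 := nbhs_scale _ _ h2 C0; have H2 := nbhs_scale _ _ (hN _ h2) C0.
  have H3 := nbhs_scale _ _ hi C0; have H4 := nbhs_scale _ _ (hN _ hi) C0.
  near=> x => t t1.
  have C2 : C (2 *: x) by near: x.
  have Cm2 : C (- 2 *: x) by near: x.
  have Ci : C ((2 * 'i%C) *: x) by near: x.
  have Cmi : C (- (2 * 'i%C) *: x) by near: x.
  set a := complex.Re t; set c := complex.Im t.
  have eqt : t *: x = 2^-1 *: (a%:C%C *: (2 *: x)) +
                      (1 - 2^-1) *: (c%:C%C *: ((2 * 'i%C) *: x)).
    rewrite {1}[t]complexE !scalerA scalerDl; congr (_ *: _ + _ *: _).
    exact: half_id. exact: half_id2.
  have h20 : (0 : R[i]) <= 2^-1 by rewrite invr_ge0 ler0n.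
  have h21 : (2^-1 : R[i]) <= 1 by rewrite invf_le1 ?ler1n ?ltr0n.
  have := cC (a%:C%C *: (2 *: x) : convex_lmodType E)
             (c%:C%C *: ((2 * 'i%C) *: x) : convex_lmodType E) (Itv01 h20 h21).
  rewrite !inE convE /= -eqt; apply.
    apply: seg_sym => //; first by rewrite -scaleNr.
      exact: realC.
    exact/le1C/absRe.
  apply: seg_sym => //; first by rewrite -scaleNr.
    exact: realC.
  exact/le1C/absIm.
-
  have hN : (-1 : R) != 0 by rewrite oppr_eq0 oner_eq0.
  have H1 := nbhs_scale _ _ hN C0.
  near=> x => t t1.
  have Cx : C x by near: x.
  have Cmx : C (-1 *: x) by near: x.
  apply: (seg_sym C x t cC C00 Cx) => //; first by rewrite -scaleN1r.
  exact: num_real.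
Unshelve. all: by end_near. Qed.

Lemma CB {b : bool} {E : tvsType (lcs_field R b)} (U : set E) : nbhs 0 U ->
  exists W : set E, [/\ nbhs 0 W, W `<=` U,
     convex_set (W : set (convex_lmodType E)) & balanced_set W].
Proof.
move=> U0; have [C [C0 CU cC]] := convex_nbhs _ U0.
have [QC cQ bQ] := balanced_hull _ cC.
exists [set x | forall t : lcs_field R b, `|t| <= 1 -> C (t *: x)]; split => //.
  exact: nbhs_hull.
exact: subset_trans QC CU.
Qed.
End CB2.


Section Prod.
Context {R : realType} {b : bool}.
Local Notation K := (lcs_field R b).
Variable E : nat -> tvsType K.

Definition pproj (i : nat) (f : prodLCS E) : E i := f i.
Lemma pproj_lin i : linear (pproj i).
Proof. by []. Qed.
HB.instance Definition _ i := GRing.isLinear.Build K (prodLCS E) (E i) *:%R (pproj i) (pproj_lin i).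

Definition pinj (i : nat) (v : E i) : prodLCS E := dfwith (fun j => 0 : E j) i v.
Lemma pinj_same i v : pinj i v i = v.
Proof. by rewrite /pinj dfwithin. Qed.
Lemma pinj_other i v j : i != j -> pinj i v j = 0.
Proof. by move=> ij; rewrite /pinj dfwithout. Qed.
Lemma pinj_lin i : linear (pinj i).
Proof.
move=> a u v; apply: functional_extensionality_dep => j.
change (pinj i (a *: u + v) j = a *: pinj i u j + pinj i v j).
have [<-|ij] := eqVneq i j; first by rewrite !pinj_same.
by rewrite !pinj_other // scaler0 addr0.
Qed.
HB.instance Definition _ i := GRing.isLinear.Build K (E i) (prodLCS E) *:%R (pinj i) (pinj_lin i).

Lemma pproj_pinj i v : pproj i (pinj i v) = v.
Proof. exact: pinj_same. Qed.

Lemma psum_coord (N : nat) (y : prodLCS E) (i : nat) :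
  (\sum_(k < N) pinj k (y k)) i = if (i < N)%N then y i else 0.
Proof.
elim: N => [|N IH]; first by rewrite big_ord0.
rewrite big_ord_recr /=.
have -> : (\sum_(k < N) pinj k (y k) + pinj N (y N)) i =
          (\sum_(k < N) pinj k (y k)) i + pinj N (y N) i by [].
rewrite IH ltnS; have [->|iN] := eqVneq i N.
  by rewrite ltnn leqnn pinj_same add0r.
by rewrite pinj_other 1?eq_sym // addr0 ltn_neqAle iN.
Qed.

Lemma pproj_cont i : continuous (pproj i).
Proof. exact: proj_continuous. Qed.

Lemma pinj_cont i : continuous (pinj i).
Proof. exact: dfwith_continuous. Qed.

End Prod.
Section Prod2.
Context {R : realType} {b : bool}.
Local Notation K := (lcs_field R b).
Variable E : nat -> tvsType K.

Lemma prod_fin (chi : {linear prodLCS E -> K^o}) : continuous chi ->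
  exists N, forall z : prodLCS E, (forall i, (i < N)%N -> z i = 0) -> chi z = 0.
Proof.
move=> cchi; apply: contrapT => /forallNP hN.
have hz : forall N, exists z : prodLCS E, (forall i, (i < N)%N -> z i = 0) /\ chi z != 0.
  move=> N; have /existsNP [z /not_implyP [h1 h2]] := hN N.
  by exists z; split => //; apply/eqP.
have [Z hZ] := choice hz.
pose w N : prodLCS E := (chi (Z N))^-1 *: Z N.
have chiw N : chi (w N) = 1.
  rewrite /w linearZ /=; change ((chi (Z N))^-1 * chi (Z N) = 1).
  by rewrite mulVf //; have [] := hZ N.
have wcvg : w @ \oo --> (0 : prodLCS E).
  apply/cvg_sup => i U [V] [[W] oW <-] W0 WU.
  apply: (filterS WU); exists i.+1 => // n /= hn.
  have -> : w n i = 0.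
    rewrite /w; change ((chi (Z n))^-1 *: Z n i = 0).
    by rewrite (proj1 (hZ n) i hn) scaler0.
  exact: W0.
have h := cvg_comp _ _ wcvg (cchi 0).
have e1 : chi \o w = fun=> 1 by apply: funext => n /=; exact: chiw.
rewrite e1 linear0 in h.
have := h _ (@nbhs0_lt _ (K^o) _ ltr01).
by case=> n _ /(_ n (leqnn n)) /=; rewrite normr1 ltxx.
Qed.

Lemma prod_decomp (chi : {linear prodLCS E -> K^o}) : continuous chi ->
  exists N, forall y : prodLCS E, chi y = \sum_(k < N) chi (pinj E k (y k)).
Proof.
move=> cchi; have [N hN] := prod_fin _ cchi; exists N => y.
set S := \sum_(k < N) pinj E k (y k).
have e : chi y = chi S + chi (y - S) by rewrite -linearD addrC subrK.
rewrite e (hN (y - S)) ?addr0; first by rewrite /S linear_sum.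
move=> i iN; change (y i - S i = 0); by rewrite /S psum_coord iN subrr.
Qed.

Lemma prod_wCSP (p : \bar R) : (1 <= p)%E ->
  (forall i, wCSP (E := E i) p) -> wCSP (E := prodLCS E) p.
Proof.
move=> p1 hE x hx.
have H1 : forall i s, {homo s : m n / (m < n)%N} ->
    exists f, {homo f : m n / (m < n)%N} /\ weakly_Cauchy p (pproj E i \o x \o (s \o f)).
  move=> i s hs.
  have hb := bounded_lin (pproj E i) (x \o s) (pproj_cont E i) (bounded_sub x s hx).
  have [f hf hw] := hE i _ hb; exists f; split => //.
have [d [hd hQ]] := diag (fun i s => weakly_Cauchy p (pproj E i \o x \o s)) H1.
exists d => //.
have hc : forall i, weakly_Cauchy p (pproj E i \o x \o d).
  move=> i; have [s [h [Qs hh eq]]] := hQ i.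
  by apply: (WC_shift _ _ (pproj E i \o x \o s) i h) => // n /=; rewrite eq.
move=> k j hk hj; apply: WS_combine p1 _ => chi cchi.
have [N hN] := prod_decomp _ cchi.
exists N, (fun i n => chi (pinj E i (pproj E i (x (d (k n))) - pproj E i (x (d (j n)))))).
split.
  move=> i iN.
  exact: (hc i k j hk hj (chi \o pinj E i)
           (fun z => continuous_comp (pinj_cont E i z) (cchi _))).
by move=> n; rewrite hN.
Qed.

Lemma factor_wCSP (p : \bar R) (i : nat) :
  wCSP (E := prodLCS E) p -> wCSP (E := E i) p.
Proof.
apply: (wCSP_retract p (pinj E i) (pproj E i)).
- exact: pinj_cont.
- exact: pproj_cont.
- exact: pproj_pinj.
Qed.

End Prod2.

Local Open Scope convex_scope.

Lemma natC {R : realType} (n : nat) : (n%:R : R[i]) = (n%:R : R)%:C%C.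
Proof. elim: n => [|n IH] //. rewrite -addn1 !natrD IH. by apply/eqP; rewrite eq_complex /= addr0 !eqxx. Qed.

Lemma archK {R : realType} {b : bool} (t : lcs_field R b) : exists M : nat, `|t| <= M%:R.
Proof.
move: t; case: b => t.
  exists (Num.bound (complex.Re `|t|)); rewrite natC.
  have h : `|t| = (complex.Re `|t|)%:C%C by rewrite RRe_real // normr_real.
  rewrite h lecR ltW //; apply: archi_boundP.
  by have := normr_ge0 t; rewrite h -[0]/(0%:C%C) lecR.
exists (Num.bound `|t|); apply/ltW/archi_boundP; exact: normr_ge0.
Qed.

Section DSum.
Context {R : realType} {b : bool}.
Local Notation K := (lcs_field R b).
Variables (I : Type) (E : I -> tvsType K).
Local Notation D := (dsumLCS E).

Definition dc (x : D) (i : I) : E i := proj1_sig x i.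

Definition dproj (i : I) (x : D) : E i := dc x i.
Lemma dproj_lin i : linear (dproj i).
Proof. by []. Qed.
HB.instance Definition _ i := GRing.isLinear.Build K D (E i) *:%R (dproj i) (dproj_lin i).

Local Notation dinj i := (@dsinj _ _ E i).

Lemma dinj_same i v : dc (dinj i v) i = v.
Proof.
rewrite /dc /dsinj /= /dsinj_fun; case: pselect => // e.
by rewrite (Prop_irrelevance e erefl).
Qed.
Lemma dinj_other i v j : i <> j -> dc (dinj i v) j = 0.
Proof. by move=> ij; rewrite /dc /dsinj /= /dsinj_fun; case: pselect. Qed.

Lemma dc_add (x y : D) i : dc (x + y) i = dc x i + dc y i. Proof. by []. Qed.
Lemma dc_scale (a : K) (x : D) i : dc (a *: x) i = a *: dc x i. Proof. by []. Qed.
Lemma dc_opp (x : D) i : dc (- x) i = - dc x i. Proof. by []. Qed.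
Lemma dc0 i : dc 0 i = 0. Proof. by []. Qed.

Lemma dc_eq (x y : D) : (forall i, dc x i = dc y i) -> x = y.
Proof. by move=> h; apply: dsum_eq; apply: functional_extensionality_dep. Qed.

Lemma dinj_lin i : linear (dinj i).
Proof.
move=> a u v; apply: dc_eq => j; rewrite dc_add dc_scale.
have [ij|ij] := pselect (i = j).
  by subst j; rewrite !dinj_same.
by rewrite !dinj_other // scaler0 addr0.
Qed.
HB.instance Definition _ i := GRing.isLinear.Build K (E i) D *:%R (dinj i) (dinj_lin i).

Lemma dproj_dinj i v : dproj i (dinj i v) = v.
Proof. exact: dinj_same. Qed.

Lemma open_dsumE (A : set D) : open A = dsum_open A.
Proof. by []. Qed.


Lemma dzn_coord i (W : set (E i)) : nbhs 0 W ->
  convex_set (W : set (convex_lmodType (E i))) -> balanced_set W ->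
  dsum_zero_nbhd [set y : D | W (dc y i)].
Proof.
move=> W0 cW bW; split.
- move=> y z l /set_mem Wy /set_mem Wz; apply/mem_set.
  have := cW (dc y i) (dc z i) l; rewrite !inE; apply => //.
- move=> t t1 _ [y Wy <-] /=; apply: (bW t t1); by exists (dc y i).
- move=> j; have [ij|ij] := pselect (i = j).
    subst j; apply: filterS W0 => v Wv; change (W (dc (dinj i v) i)); rewrite dinj_same //.
  apply: nearW => v; change (W (dc (dinj j v) i)); rewrite dinj_other; [exact: nbhs_singleton W0 | by move=> e; apply: ij].
Qed.

Let h2 : (2 : K)^-1 != 0.
Proof. by rewrite invr_eq0 pnatr_eq0. Qed.

Lemma dzn_half (V : set D) : dsum_zero_nbhd V ->
  dsum_zero_nbhd [set (2 : K)^-1 *: v | v in V].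
Proof.
move=> [cV bV nV]; split.
- move=> _ _ l /set_mem [a Va <-] /set_mem [c Vc <-]; apply/mem_set.
  exists ((a : convex_lmodType D) <| l |> (c : convex_lmodType D)).
    by have := cV a c l; rewrite !inE; apply.
  change (2^-1 *: (l%:num *: a + (1 - l%:num) *: c) =
          l%:num *: (2^-1 *: a) + (1 - l%:num) *: (2^-1 *: c)).
  by rewrite scalerDr !scalerA; congr (_ *: _ + _ *: _); exact: mulrC.
- move=> t t1 _ [_ [a Va <-] <-]; exists (t *: a).
    by apply: (bV t t1); exists a.
  by rewrite !scalerA mulrC.
- move=> j; have := nbhs0Z h2 (nV j); apply: filterS => _ [u Vu <-] /=.
  by exists (dinj j u) => //; rewrite linearZ.
Qed.

Lemma dzn_halfsum (V : set D) a c : dsum_zero_nbhd V -> V a -> V c ->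
  V ((2 : K)^-1 *: a + (2 : K)^-1 *: c).
Proof.
move=> [cV _ _] Va Vc.
have h20 : (0 : K) <= 2^-1 by rewrite invr_ge0 ler0n.
have h21 : (2^-1 : K) <= 1 by rewrite invf_le1 ?ler1n ?ltr0n.
have := cV a c (Itv01 h20 h21); rewrite !inE /=; move=> /(_ Va Vc).
have e : (1 - 2^-1 : K) = 2^-1 by rewrite [X in X - _](splitr 1) mul1r addrK.
move=> h; have {h} : V (2^-1 *: a + (1 - 2^-1) *: c) by exact: h.
by rewrite e.
Qed.

Lemma dzn0 (i0 : I) (V : set D) : dsum_zero_nbhd V -> V 0.
Proof.
move=> [_ _ nV]; have := nbhs_singleton (nV i0); by rewrite /= linear0.
Qed.

Lemma dzn_nbhs (i0 : I) (V : set D) : dsum_zero_nbhd V -> nbhs (0 : D) V.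
Proof.
move=> zV.
pose O := [set y : D | exists V', dsum_zero_nbhd V' /\ (+%R y) @` V' `<=` V].
have oO : open O.
  rewrite open_dsumE => y [V' [zV' V'V]].
  exists [set (2 : K)^-1 *: v | v in V']; first exact: dzn_half.
  move=> _ [_ [a Va <-] <-]; exists [set (2 : K)^-1 *: v | v in V'].
  split; first exact: dzn_half.
  move=> _ [_ [c Vc <-] <-]; apply: V'V; exists (2^-1 *: a + 2^-1 *: c).
    exact: dzn_halfsum.
  by rewrite addrA.
have O0 : O 0 by exists V; split => // _ [v Vv <-]; rewrite add0r.
have OV : O `<=` V.
  move=> y [V' [zV' V'V]]; rewrite -[y]addr0; apply: V'V; exists 0 => //.
  exact: dzn0 zV'.
rewrite nbhsE; exists O => //; split => //.
Qed.

Lemma dproj_cont i : continuous (dproj i).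
Proof.
move=> x A; rewrite nbhsE => -[B [oB Bx] BA].
pose O := dproj i @^-1` B.
have oO : open O.
  rewrite open_dsumE => y Oy.
  have nB : nbhs (dc y i) B by apply: open_nbhs_nbhs.
  have nB' : nbhs (0 : E i) [set v | B (dc y i + v)].
    have := nbhsB (- dc y i) nB; rewrite addNr; apply: filterS => _ [u Bu <-].
    by rewrite /= addrA subrr add0r.
  have [W [W0 WB cW bW]] := CB _ _ nB'.
  exists [set z : D | W (dc z i)]; first exact: dzn_coord.
  by move=> _ [v Wv <-]; rewrite /O /preimage /= -dc_add; apply: WB.
rewrite nbhsE; exists O; first by split.
by move=> z Oz; apply: BA.
Qed.

Lemma dinj_cont i : continuous (dinj i).
Proof.
move=> v A; rewrite nbhsE => -[B [oB Bv] BA].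
move: oB; rewrite open_dsumE => /(_ _ Bv) [V [_ _ nV] VB].
have := nbhsT v (nV i); apply: filterS => _ [w Vw <-].
apply: BA; apply: VB; exists (dinj i w) => //.
by rewrite linearD.
Qed.

Local Notation J := {classic I}.

Lemma dc_sum (s : seq J) (F : J -> D) i : dc (\sum_(j <- s) F j) i = \sum_(j <- s) dc (F j) i.
Proof. exact: (raddf_sum (dproj i)). Qed.

Lemma dsum_decomp (x : D) (s : seq J) : uniq s ->
  (forall i : J, dc x i != 0 -> i \in s) ->
  x = \sum_(j <- s) dinj j (dc x j).
Proof.
move=> us hs; apply: dc_eq => i; rewrite dc_sum.
have [iS|iS] := boolP ((i : J) \in s).
  rewrite (bigD1_seq (i : J)) // dinj_same big1; [by rewrite /= addr0 | move=> j ji].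
  by rewrite dinj_other //; move=> e; move: ji; rewrite e eqxx.
rewrite big1_seq.
  by apply/eqP; apply: contraNT iS; exact: hs.
move=> j /andP[_ js]; rewrite dinj_other // => e; move: iS; by rewrite -e js.
Qed.

Lemma dsum_fin (i0 : I) (x : nat -> D) : (forall i, hausdorff_space (E i)) ->
  tvs_bounded (range x) ->
  exists s : seq J, uniq s /\ forall n (i : J), dc (x n) i != 0 -> i \in s.
Proof.
move=> hE hx.
pose U := [set i : J | exists n, dc (x n) i != 0].
suff fU : finite_set U.
  have [s0 hs0] := (finite_seqP U).1 fU.
  exists (undup s0); split; first exact: undup_uniq.
  move=> n i hi; rewrite mem_undup; have : U i by exists n.
  by rewrite hs0.
apply: contrapT => nfU.
have hn : forall i : J, exists n, U i -> dc (x n) i != 0.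
  move=> i; have [[n hn]|nUi] := pselect (U i); first by exists n.
  by exists 0%N.
have [nn hnn] := choice hn.
have hW : forall i : J, exists W : set (E i), [/\ nbhs 0 W,
    convex_set (W : set (convex_lmodType (E i))), balanced_set W &
    U i -> ~ W (((nn i).+1%:R : K)^-1 *: dc (x (nn i)) i)].
  move=> i; have [Ui|nUi] := pselect (U i).
    have q0 : (((nn i).+1%:R : K)^-1 *: dc (x (nn i)) i) != 0.
      by rewrite scaler_eq0 negb_or invr_eq0 pnatr_eq0 /= hnn.
    have [A [A0 nAq]] := hsep _ _ (hE i) (nesym (elimN eqP q0)).
    have [W [W0 WA cW bW]] := CB _ _ A0.
    by exists W; split => // _ /WA.
  exists setT; split => //; first exact: filterT.
pose WW (i : J) : set (E i) := proj1_sig (cid (hW i)).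
have hWW (i : J) : [/\ nbhs 0 (WW i),
    convex_set (WW i : set (convex_lmodType (E i))), balanced_set (WW i) &
    U i -> ~ WW i (((nn i).+1%:R : K)^-1 *: dc (x (nn i)) i)].
  exact: (proj2_sig (cid (hW i))).
pose V := [set y : D | forall i : J, WW i (dc y i)].
have zV : dsum_zero_nbhd V.
  split.
  - move=> y z l /set_mem Vy /set_mem Vz; apply/mem_set => i.
    have [_ cW _ _] := hWW i.
    have := cW (dc y i) (dc z i) l; rewrite !inE; apply; [exact: Vy | exact: Vz].
  - move=> t t1 _ [y Vy <-] i; have [_ _ bW _] := hWW i.
    by apply: (bW t t1); exists (dc y i) => //; apply: Vy.
  - move=> j; have [W0 _ _ _] := hWW j; apply: filterS W0 => v Wv i.
    have [ij|ij] := pselect (j = i).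
      subst i; change (WW j (dc (dinj j v) j)); by rewrite dinj_same.
    change (WW i (dc (dinj j v) i)); rewrite dinj_other //.
    by have [Wi0 _ _ _] := hWW i; exact: nbhs_singleton Wi0.
have [s0 s00 hs] := hx V (dzn_nbhs i0 _ zV).
have [M hM] := archK s0.
have [i [Ui Mi]] : exists i, U i /\ (M <= nn i)%N.
  apply: contrapT => hno; apply: nfU.
  apply: (@sub_finite_set _ _ (\bigcup_(k in `I_M) [set i : J | dc (x k) i != 0])).
    move=> i Ui; exists (nn i); last exact: hnn.
    rewrite /= ltnNge; apply/negP => Mi; apply: hno; by exists i.
  apply: bigcup_finite; first exact: finite_II.
  by move=> k _; exact: (proj2_sig (x k)).
pose c : K := (nn i).+1%:R; pose t : K := (M.+1)%:R.
have st : s0 < t.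
  rewrite -(ger0_norm (ltW s00)); apply: le_lt_trans hM _.
  by rewrite ltr_nat.
have [y Vy ey] := hs t st (x (nn i)) (ex_intro2 _ _ (nn i) Logic.I erefl).
have [_ _ bW nW] := hWW i; apply: (nW Ui).
have -> : dc (x (nn i)) i = t *: dc y i by rewrite -ey.
rewrite scalerA; apply: bW; last by exists (dc y i) => //; apply: Vy.
rewrite normrM normfV !normr_nat mulrC ler_pdivrMr ?ltr0n // mul1r ler_nat.
by rewrite ltnS.
Qed.

Lemma dsum_wCSP (p : \bar R) (i0 : I) : (1 <= p)%E ->
  (forall i, hausdorff_space (E i)) ->
  (forall i, wCSP (E := E i) p) -> wCSP (E := D) p.
Proof.
move=> p1 hE hW x hx.
have [s [us hs]] := dsum_fin i0 x hE hx.
pose ix k : J := nth (i0 : J) s k.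
have H1 : forall k t, {homo t : m n / (m < n)%N} ->
    exists f, {homo f : m n / (m < n)%N} /\ weakly_Cauchy p (dproj (ix k) \o x \o (t \o f)).
  move=> k t ht.
  have hb := bounded_lin (dproj (ix k)) (x \o t) (dproj_cont (ix k)) (bounded_sub x t hx).
  by have [f hf hw] := hW (ix k) _ hb; exists f; split.
have [d [hd hQ]] := diag (fun k t => weakly_Cauchy p (dproj (ix k) \o x \o t)) H1.
exists d => //.
have hc : forall k, weakly_Cauchy p (dproj (ix k) \o x \o d).
  move=> k; have [t [h [Qt hh eq]]] := hQ k.
  by apply: (WC_shift _ _ (dproj (ix k) \o x \o t) k h) => // n /=; rewrite eq.
move=> k j hk hj; apply: WS_combine p1 _ => chi cchi.
exists (size s), (fun m n => chi (dinj (ix m) (dproj (ix m) (x (d (k n))) - dproj (ix m) (x (d (j n)))))).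
split.
  move=> m _.
  exact: (hc m k j hk hj (chi \o dinj (ix m))
           (fun z => continuous_comp (dinj_cont (ix m) z) (cchi _))).
move=> n; set y := x (d (k n)) - x (d (j n)).
have hy : forall i : J, dc y i != 0 -> i \in s.
  move=> i; rewrite /y dc_add dc_opp.
  have [h1|h1] := eqVneq (dc (x (d (k n))) i) 0.
    have [h3|h3] := eqVneq (dc (x (d (j n))) i) 0.
      by rewrite h1 h3 subrr eqxx.
    by move=> _; apply: (hs _ _ h3).
  by move=> _; apply: (hs _ _ h1).
rewrite {1}(dsum_decomp _ _ us hy) linear_sum (big_nth (i0 : J)) big_mkord.
by apply: eq_bigr.
Qed.

Lemma dsum_factor (p : \bar R) (i : I) : wCSP (E := D) p -> wCSP (E := E i) p.
Proof.
apply: (wCSP_retract p (dinj i) (dproj i)).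
- exact: dinj_cont.
- exact: dproj_cont.
- exact: dproj_dinj.
Qed.

End DSum.

Theorem propositionp (R : realType) (b : bool) (p : \bar R) :
  (1 <= p)%E ->
  (forall E : nat -> tvsType (lcs_field R b),
     (forall i, hausdorff_space (E i)) ->
     (wCSP (E := prodLCS E) p <-> forall i, wCSP (E := E i) p)) /\
  (forall (I : Type) (E : I -> tvsType (lcs_field R b)),
     inhabited I ->
     (forall i, hausdorff_space (E i)) ->
     (wCSP (E := dsumLCS E) p <-> forall i, wCSP (E := E i) p)).
Proof.
move=> p1; split.
- move=> E hE; split; first by move=> h i; exact: (factor_wCSP E p i h).
  exact: (prod_wCSP E p p1).
- move=> I E [i0] hE; split; first by move=> h i; exact: (dsum_factor I E p i h).
  exact: (dsum_wCSP I E p i0 p1 hE).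
Qed.
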